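(* Let $n\in\{1,2,3\}$, $k\in\mathbb{N}$ ($k=1$ if $n=3$), and for $\omega=\sqrt{m^2-\epsilon^2}$ close to $m$ let $(v,u)$ be the solitary wave profile of the context. Define the $4\times4$ matrix-valued function $W(R,\epsilon)$ whose entries, with $v,u,f,f'$ evaluated at $r=R/\epsilon$, are $W_{13}=\frac1{2m}-\hat V(R)^{2k}-\frac{m-\omega-f}{\epsilon^2}$, $W_{24}=\omega-m-f$, $W_{31}=-\frac1{2m}+(2k+1)\hat V(R)^{2k}-\frac{\omega-m+f+2f'v^2}{\epsilon^2}$, $W_{32}=W_{41}=\frac{2f'vu}{\epsilon}$, $W_{42}=m-\omega+f-2f'u^2$, and all other entries zero. Then $\sup_{R}\|W(R,\epsilon)\|_{\mathbb{C}^4\to\mathbb{C}^4}=O(\epsilon^2)$ as $\epsilon\to0$.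
   Context: Solitary wave profile: with $\epsilon=\sqrt{m^2-\omega^2}$, $(v,u)$ is the real solution of $\omega v=\partial_r u+\frac{n-1}{r}u+mv-(v^2-u^2)^kv$, $\omega u=-\partial_r v-mu+(v^2-u^2)^ku$ (radial variable $r>0$ for $n=2,3$; $r=x\in\mathbb{R}$ for $n=1$) of the form $v(r)=\epsilon^{1/k}[\hat V(\epsilon r)+\tilde V(\epsilon r)]$, $u(r)=\epsilon^{1+1/k}[\hat U(\epsilon r)+\tilde U(\epsilon r)]$ with $\|\tilde V\|_{H^2}+\|\tilde U\|_{H^2}=O(\epsilon^2)$, where $\hat V(R)=(2m)^{-1/(2k)}F(R)$, $\hat U=-(2m)^{-1/(2k)-1}F'$, and $F$ is the unique positive radial $H^1(\mathbb{R}^n)$ solution of $-\Delta F-F^{2k+1}=-F$. Also $f=(v^2-u^2)^k$, $f'=k(v^2-u^2)^{k-1}$. ($W$ is the zero-order remainder obtained when the eigenvalue problem for the linearization $\begin{pmatrix}0&\mathrm{L}_-\\-\mathrm{L}_+&0\end{pmatrix}$ is rescaled by $R=\epsilon r$, $\varphi_2=\epsilon\Phi_2$, $\vartheta_2=\epsilon\Theta_2$, dividing rows 1,3 by $\epsilon^2$ and rows 2,4 by $\epsilon$, and compared with its $\epsilon\to0$ limit.) *)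

(* Defs.v *)
From Stdlib Require Import Reals Lra Lia.
Open Scope R_scope.

Definition dom (n : nat) (r : R) : Prop := n = 1%nat \/ 0 < r.

(* Integral over the domain of a (nonnegative) integrand is finite and <= L:
   all Riemann integrals over compact subintervals [a,b] of the domain
   exist and are bounded by L (improper integral, exhausted from inside). *)
Definition bounded_integral (D : R -> Prop) (g : R -> R) (L : R) : Prop :=
  forall a b, D a -> D b -> a <= b ->
    exists pr : Riemann_integrable g a b, RiemannInt pr <= L.

(* Radial weight r^{n-1} and radial squared H^k densities (up to the
   constant |S^{n-1}|). For a radial g(|x|): |grad g|^2 = g'^2 and
   |D^2 g|^2 = g''^2 + (n-1) (g'/r)^2. *)
Definition H1_le (n : nat) (g g1 : R -> R) (M : R) : Prop :=
  bounded_integral (dom n) (fun r => (g r ^ 2 + g1 r ^ 2) * r ^ (n - 1)) (M ^ 2).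

Definition H2_le (n : nat) (g : R -> R) (M : R) : Prop :=
  0 <= M /\
  exists g1 g2 : R -> R,
    (forall r, dom n r -> derivable_pt_lim g r (g1 r) /\ derivable_pt_lim g1 r (g2 r)) /\
    bounded_integral (dom n)
      (fun r => (g r ^ 2 + g1 r ^ 2 + g2 r ^ 2 + INR (n - 1) * (g1 r / r) ^ 2) * r ^ (n - 1))
      (M ^ 2).

(* F is a positive radial H^1(R^n) solution of -Delta F - F^{2k+1} = -F,
   written in the radial variable, with F' = dF, F'' = ddF. *)
Definition ground_state (n k : nat) (F dF ddF : R -> R) : Prop :=
  (forall r, dom n r ->
     derivable_pt_lim F r (dF r) /\ derivable_pt_lim dF r (ddF r) /\
     0 < F r /\
     - (ddF r + INR (n - 1) / r * dF r) - F r ^ (2 * k + 1) = - F r) /\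
  (n = 1%nat -> forall x, F (- x) = F x) /\
  (exists L, H1_le n F dF L).

Definition omega (m eps : R) : R := sqrt (m ^ 2 - eps ^ 2).

(* (v,u) real solution of the stationary radial Dirac system. *)
Definition dirac_profile (n k : nat) (m om : R) (v u : R -> R) : Prop :=
  exists dv du : R -> R,
  forall r, dom n r ->
    derivable_pt_lim v r (dv r) /\ derivable_pt_lim u r (du r) /\
    om * v r = du r + INR (n - 1) / r * u r + m * v r - (v r ^ 2 - u r ^ 2) ^ k * v r /\
    om * u r = - dv r - m * u r + (v r ^ 2 - u r ^ 2) ^ k * u r.

Definition Vhat (k : nat) (m : R) (F : R -> R) (rho : R) : R :=
  Rpower (2 * m) (- (1 / (2 * INR k))) * F rho.
Definition Uhat (k : nat) (m : R) (dF : R -> R) (rho : R) : R :=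
  - (Rpower (2 * m) (- (1 / (2 * INR k)) - 1) * dF rho).

(* Remainders: v(r) = eps^{1/k} [Vhat(eps r) + Vt(eps r)],
               u(r) = eps^{1+1/k} [Uhat(eps r) + Ut(eps r)]. *)
Definition Vtil (k : nat) (m : R) (F : R -> R) (eps : R) (v : R -> R) (rho : R) : R :=
  v (rho / eps) / Rpower eps (1 / INR k) - Vhat k m F rho.
Definition Util (k : nat) (m : R) (dF : R -> R) (eps : R) (u : R -> R) (rho : R) : R :=
  u (rho / eps) / Rpower eps (1 + 1 / INR k) - Uhat k m dF rho.

(* The 4x4 matrix W(R,eps), indices 0..3 (entry W_{ij} is W (i-1) (j-1)). *)
Definition Wmat (k : nat) (m : R) (F : R -> R) (eps : R) (v u : R -> R) (rho : R)
  (i j : nat) : R :=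
  let r := rho / eps in
  let vv := v r in
  let uu := u r in
  let f := (vv ^ 2 - uu ^ 2) ^ k in
  let fp := INR k * (vv ^ 2 - uu ^ 2) ^ (k - 1) in
  let om := omega m eps in
  let Vh := Vhat k m F rho in
  match i, j with
  | O, S (S O) => 1 / (2 * m) - Vh ^ (2 * k) - (m - om - f) / eps ^ 2
  | S O, S (S (S O)) => om - m - f
  | S (S O), O => - (1 / (2 * m)) + INR (2 * k + 1) * Vh ^ (2 * k)
            - (om - m + f + 2 * fp * vv ^ 2) / eps ^ 2
  | S (S O), S O => 2 * fp * vv * uu / eps
  | S (S (S O)), O => 2 * fp * vv * uu / eps
  | S (S (S O)), S O => m - om + f - 2 * fp * uu ^ 2
  | _, _ => 0
  end.

(* Complex numbers as pairs (Re, Im); vectors of C^4 as z 0, .., z 3. *)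
Definition cabs2 (z : R * R) : R := fst z ^ 2 + snd z ^ 2.
Definition vnorm4 (z : nat -> R * R) : R := sqrt (sum_f_R0 (fun i => cabs2 (z i)) 3).
Definition matvec4 (A : nat -> nat -> R) (z : nat -> R * R) (i : nat) : R * R :=
  (sum_f_R0 (fun j => A i j * fst (z j)) 3, sum_f_R0 (fun j => A i j * snd (z j)) 3).
Definition opnorm_le4 (A : nat -> nat -> R) (M : R) : Prop :=
  forall z : nat -> R * R, vnorm4 (matvec4 A z) <= M * vnorm4 z.

(* Main.v *)
Require Import Defs.
From Stdlib Require Import Reals Lra Lia.
From Coquelicot Require Import Coquelicot.
Open Scope R_scope.

Lemma lim_cont f x l : derivable_pt_lim f x l -> continuity_pt f x.
Proof. intro H. apply derivable_continuous_pt. exists l. exact H. Qed.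

Lemma L1 (g g' h q Q : R -> R) a b alpha K :
 a <= b -> 0 <= alpha ->
 (forall x, a <= x <= b -> derivable_pt_lim g x (g' x) /\ continuity_pt g' x /\
     derivable_pt_lim Q x (q x) /\ continuity_pt q x) ->
 forall pr : Riemann_integrable h a b, RiemannInt pr <= K ->
 (forall x, a < x < b -> g' x <= alpha * h x + q x) ->
 g b - g a <= alpha * K + (Q b - Q a).
Proof.
intros hab ha H pr HK Hle.
assert (E1 : is_RInt g' a b (minus (g b) (g a))).
{ apply (@is_RInt_derive R_CompleteNormedModule); intros x Hx; rewrite Rmin_left in Hx by lra; rewrite Rmax_right in Hx by lra;
  destruct (H x Hx) as (H1 & H2 & H3 & H4).
  - now apply is_derive_Reals.
  - now apply continuity_pt_filterlim. }
assert (E2 : is_RInt q a b (minus (Q b) (Q a))).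
{ apply (@is_RInt_derive R_CompleteNormedModule); intros x Hx; rewrite Rmin_left in Hx by lra; rewrite Rmax_right in Hx by lra;
  destruct (H x Hx) as (H1 & H2 & H3 & H4).
  - now apply is_derive_Reals.
  - now apply continuity_pt_filterlim. }
assert (Eh : ex_RInt h a b) by (apply ex_RInt_Reals_1; exact pr).
assert (Ehq : ex_RInt (fun x => alpha * h x + q x) a b).
{ assert (X : ex_RInt (V:=R_NormedModule) (fun x => plus (scal alpha (h x)) (q x)) a b).
  { apply (ex_RInt_plus (V:=R_NormedModule)). apply (ex_RInt_scal (V:=R_NormedModule)); exact Eh. exists (minus (Q b) (Q a)); exact E2. }
  exact X. }
assert (Hm := RInt_le g' (fun x => alpha * h x + q x) a b hab (ex_intro _ _ E1) Ehq Hle).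
rewrite (is_RInt_unique _ _ _ _ E1) in Hm.
rewrite (RInt_plus (fun x => scal alpha (h x)) q) in Hm; [| apply (ex_RInt_scal (V:=R_NormedModule)); exact Eh | exists (minus (Q b) (Q a)); exact E2].
rewrite (RInt_scal (V:=R_CompleteNormedModule)) in Hm by exact Eh.
rewrite (is_RInt_unique _ _ _ _ E2) in Hm.
rewrite (RInt_Reals h a b pr) in Hm.
unfold minus, plus, scal, opp in Hm; simpl in Hm; unfold mult in Hm; simpl in Hm.
assert (alpha * RiemannInt pr <= alpha * K) by (apply Rmult_le_compat_l; auto).
lra.
Qed.

Lemma der_eq f x l l' : derivable_pt_lim f x l -> l = l' -> derivable_pt_lim f x l'.
Proof. intros H ->; exact H. Qed.
Lemma dmul f g x df dg : derivable_pt_lim f x df -> derivable_pt_lim g x dg ->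
  derivable_pt_lim (fun y => f y * g y) x (df * g x + f x * dg).
Proof. intros. apply (derivable_pt_lim_mult f g x df dg); auto. Qed.
Lemma dplus f g x df dg : derivable_pt_lim f x df -> derivable_pt_lim g x dg ->
  derivable_pt_lim (fun y => f y + g y) x (df + dg).
Proof. intros. apply (derivable_pt_lim_plus f g x df dg); auto. Qed.
Lemma dopp f x df : derivable_pt_lim f x df -> derivable_pt_lim (fun y => - f y) x (- df).
Proof. intros. apply (derivable_pt_lim_opp f x df); auto. Qed.
Lemma dconst c x : derivable_pt_lim (fun _ => c) x 0.
Proof. apply derivable_pt_lim_const. Qed.
Lemma did x : derivable_pt_lim (fun y => y) x 1.
Proof. apply derivable_pt_lim_id. Qed.
Lemma cmul f g x : continuity_pt f x -> continuity_pt g x -> continuity_pt (fun y => f y * g y) x.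
Proof. intros; apply (continuity_pt_mult f g); auto. Qed.
Lemma cplus f g x : continuity_pt f x -> continuity_pt g x -> continuity_pt (fun y => f y + g y) x.
Proof. intros; apply (continuity_pt_plus f g); auto. Qed.
Lemma copp f x : continuity_pt f x -> continuity_pt (fun y => - f y) x.
Proof. intros; apply (continuity_pt_opp f); auto. Qed.
Lemma cconst c x : continuity_pt (fun _ => c) x.
Proof. apply continuity_pt_const. intros a b; reflexivity. Qed.
Lemma cid x : continuity_pt (fun y => y) x.
Proof. apply derivable_continuous_pt. apply derivable_pt_id. Qed.

Ltac dauto := repeat first [ apply dmul | apply dplus | apply dopp | apply dconst | apply did | eassumption ].
Ltac cauto := repeat first [ apply cmul | apply cplus | apply copp | apply cconst | apply cid | eassumption ].

Lemma amgm x y : 2 * Rabs (x*y) <= x^2+y^2.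
Proof. rewrite Rabs_mult, <- (pow2_abs x), <- (pow2_abs y).
pose proof (pow2_ge_0 (Rabs x - Rabs y)). nra. Qed.

Lemma far (g g1 g2 h : R -> R) a K :
 (forall x, a <= x <= a+1 -> derivable_pt_lim g x (g1 x) /\ derivable_pt_lim g1 x (g2 x)) ->
 forall pr : Riemann_integrable h a (a+1), RiemannInt pr <= K ->
 (forall x, a < x < a+1 -> g x ^ 2 + g1 x ^ 2 <= h x) ->
 g a ^ 2 <= 2 * K.
Proof.
intros Hd pr HK Hh.
assert (X := L1 (fun s => - ((a + 1 - s) * (g s * g s))) (fun s => g s * g s - 2 * (a+1-s) * (g s * g1 s))
  h (fun _ => 0) (fun _ => 0) a (a+1) 2 K ltac:(lra) ltac:(lra)).
assert (H0 : forall x, a <= x <= a+1 ->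
   derivable_pt_lim (fun s => - ((a + 1 - s) * (g s * g s))) x (g x * g x - 2 * (a+1-x) * (g x * g1 x)) /\
   continuity_pt (fun s => g s * g s - 2 * (a+1-s) * (g s * g1 s)) x /\
   derivable_pt_lim (fun _ => 0) x 0 /\ continuity_pt (fun _ => 0) x).
{ intros x Hx. destruct (Hd x Hx) as [D1 D2].
  assert (C1 := lim_cont _ _ _ D1). assert (C2 := lim_cont _ _ _ D2).
  split; [|split; [|split]].
  - eapply der_eq. { unfold Rminus. dauto. } cbv beta; ring.
  - unfold Rminus. cauto.
  - apply dconst.
  - apply cconst. }
specialize (X H0 pr HK).
assert (X2 : forall x, a < x < a+1 -> g x * g x - 2 * (a+1-x) * (g x * g1 x) <= 2 * h x + 0).
{ intros x Hx. specialize (Hh x Hx). assert (0 <= a+1-x <= 1) by lra.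
  assert (2 * Rabs (g x * g1 x) <= g x ^ 2 + g1 x ^ 2).
  { apply amgm. }
  pose proof (Rle_abs (- (g x * g1 x))) as R1; rewrite Rabs_Ropp in R1.
  assert ((a+1-x) * (g x * g1 x) >= -Rabs (g x * g1 x)).
  { pose proof (Rabs_pos (g x * g1 x)). set (p := g x * g1 x) in *. destruct (Rle_dec 0 p). nra. nra. }
  pose proof (pow2_ge_0 (g1 x)). nra. }
specialize (X X2). replace (a + 1 - (a+1)) with 0 in X by ring. lra.
Qed.

Lemma hlow_far n g g1 g2 s : (n = 1%nat \/ n = 2%nat \/ n = 3%nat) -> (n = 1%nat \/ 1 <= s) ->
  g ^ 2 + g1 ^ 2 <= (g ^ 2 + g1 ^ 2 + g2 ^ 2 + INR (n - 1) * (g1 / s) ^ 2) * s ^ (n - 1).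
Proof.
intros Hn Hs.
assert (0 <= INR (n - 1) * (g1 / s) ^ 2) by (apply Rmult_le_pos; [apply pos_INR | apply pow2_ge_0]).
assert (1 <= s ^ (n - 1)).
{ destruct Hs as [-> | Hs]. simpl; lra. apply pow_R1_Rle; lra. }
pose proof (pow2_ge_0 g2). pose proof (pow2_ge_0 g). pose proof (pow2_ge_0 g1). nra.
Qed.

Lemma hlow_near n g g1 g2 s : (n = 2%nat \/ n = 3%nat) -> 0 < s <= 1 ->
  g1 ^ 2 <= (g ^ 2 + g1 ^ 2 + g2 ^ 2 + INR (n - 1) * (g1 / s) ^ 2) * s ^ (n - 1).
Proof.
intros Hn Hs.
pose proof (pow2_ge_0 g2). pose proof (pow2_ge_0 g). pose proof (pow2_ge_0 g1).
assert (E : (g1 / s) ^ 2 * s ^ 2 = g1 ^ 2) by (field; lra).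
destruct Hn as [-> | ->]; simpl; [| ].
- assert (E2 : (g1 / s) ^ 2 * s = g1 ^ 2 / s) by (field; lra).
  assert (g1 ^ 2 <= g1 ^ 2 / s).
  { apply (Rmult_le_reg_r s); [lra|]. unfold Rdiv; rewrite Rmult_assoc, Rinv_l by lra. nra. }
  assert (0 <= (g ^ 2 + g1 ^ 2 + g2 ^ 2) * s) by nra.
  replace ((g ^ 2 + g1 ^ 2 + g2 ^ 2 + 1 * (g1 / s) ^ 2) * (s * 1)) with
    ((g ^ 2 + g1 ^ 2 + g2 ^ 2) * s + (g1 / s) ^ 2 * s) by ring. lra.
- assert (0 <= (g ^ 2 + g1 ^ 2 + g2 ^ 2) * (s * s)) by nra.
  replace ((g ^ 2 + g1 ^ 2 + g2 ^ 2 + (1 + 1) * (g1 / s) ^ 2) * (s * (s * 1))) with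
    ((g ^ 2 + g1 ^ 2 + g2 ^ 2) * (s * s) + 2 * ((g1 / s) ^ 2 * s ^ 2)) by ring. lra.
Qed.

Lemma sq_bound x K : 0 <= K -> x ^ 2 <= 2 * K ^ 2 -> Rabs x <= 2 * K.
Proof.
intros HK H. rewrite <- (pow2_abs x) in H. pose proof (Rabs_pos x).
destruct (Rle_dec (Rabs x) (2*K)); auto. nra.
Qed.

Lemma sob n g M M' : (n = 1%nat \/ n = 2%nat \/ n = 3%nat) -> H2_le n g M -> M <= M' -> 0 < M' ->
  forall r, dom n r -> Rabs (g r) <= 3 * M'.
Proof.
intros Hn [HM [g1 [g2 [Hd Hint]]]] HMM HM' .
set (h := fun r => (g r ^ 2 + g1 r ^ 2 + g2 r ^ 2 + INR (n - 1) * (g1 r / r) ^ 2) * r ^ (n - 1)) in Hint.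
assert (Far : forall r, dom n r -> (n = 1%nat \/ 1 <= r) -> Rabs (g r) <= 2 * M').
{ intros r Hr Hr1.
  assert (Dr1 : dom n (r+1)) by (destruct Hr; [left; auto | right; lra]).
  destruct (Hint r (r+1) Hr Dr1 ltac:(lra)) as [pr Hpr].
  apply sq_bound; [lra|].
  assert (g r ^ 2 <= 2 * M ^ 2).
  { refine (far g g1 g2 h r (M^2) _ pr Hpr _).
    - intros x Hx. apply Hd. destruct Hr; [left; auto | right; lra].
    - intros x Hx. unfold h. apply hlow_far; auto. destruct Hr1; [left; auto| right; lra]. }
  nra. }
intros r Hr.
destruct (Req_dec (INR n) 1) as [E1 | E1].
{ apply Rle_trans with (2*M'); [|lra]. apply Far; auto. left. destruct Hn as [-> | [-> | ->]]; simpl in E1; auto; lra. }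
assert (Hn2 : n = 2%nat \/ n = 3%nat) by (destruct Hn as [-> | [-> | ->]]; simpl in E1; auto; lra).
assert (Hnot1 : n <> 1%nat) by (destruct Hn2 as [-> | ->]; discriminate).
assert (rpos : 0 < r) by (destruct Hr; [contradiction | auto]).
destruct (Rle_dec 1 r) as [r1 | r1].
{ apply Rle_trans with (2*M'); [|lra]. apply Far; auto. }
assert (D1 : dom n 1) by (right; lra).
assert (G1 := Far 1 D1 ltac:(right; lra)).
destruct (Hint r 1 Hr D1 ltac:(lra)) as [pr Hpr].
assert (HK : RiemannInt pr <= M' ^ 2) by nra.
assert (Hpt : forall x, r < x < 1 -> Rabs (g1 x) <= / (2 * M') * h x + M' / 2).
{ intros x Hx. assert (g1 x ^ 2 <= h x) by (unfold h; apply hlow_near; auto; lra).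
  assert (2 * Rabs (g1 x * M') <= g1 x ^ 2 + M' ^ 2) by apply amgm.
  rewrite Rabs_mult, (Rabs_right M') in H0 by lra.
  apply (Rmult_le_reg_l (2 * M')); [lra|].
  rewrite Rmult_plus_distr_l, <- Rmult_assoc, Rinv_r by lra. nra. }
assert (Hder : forall x, r <= x <= 1 -> derivable_pt_lim g x (g1 x) /\ continuity_pt g1 x /\
    derivable_pt_lim (fun s => M' / 2 * s) x (M' / 2) /\ continuity_pt (fun _ => M' / 2) x).
{ intros x Hx. destruct (Hd x ltac:(right; lra)) as [Dg Dg1]. split; [auto | split; [eapply lim_cont; eauto | split]].
  - eapply der_eq. dauto. cbv beta; ring.
  - apply cconst. }
assert (U1 := L1 g g1 h (fun _ => M'/2) (fun s => M' / 2 * s) r 1 (/ (2 * M')) (M' ^ 2) ltac:(lra)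
   ltac:(left; apply Rinv_0_lt_compat; lra) Hder pr HK ltac:(intros x Hx; pose proof (Rle_abs (g1 x)); specialize (Hpt x Hx); lra)).
assert (Hder2 : forall x, r <= x <= 1 -> derivable_pt_lim (fun s => - g s) x (- g1 x) /\ continuity_pt (fun s => - g1 s) x /\
    derivable_pt_lim (fun s => M' / 2 * s) x (M' / 2) /\ continuity_pt (fun _ => M' / 2) x).
{ intros x Hx. destruct (Hd x ltac:(right; lra)) as [Dg Dg1]. split; [apply dopp; auto | split; [apply copp; eapply lim_cont; eauto | split]].
  - eapply der_eq. dauto. cbv beta; ring.
  - apply cconst. }
assert (U2 := L1 (fun s => - g s) (fun s => - g1 s) h (fun _ => M'/2) (fun s => M' / 2 * s) r 1 (/ (2 * M')) (M' ^ 2) ltac:(lra)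
   ltac:(left; apply Rinv_0_lt_compat; lra) Hder2 pr HK ltac:(intros x Hx; pose proof (Rle_abs (- g1 x)); rewrite Rabs_Ropp in H; specialize (Hpt x Hx); lra)).
cbv beta in U1, U2.
assert (/ (2 * M') * M' ^ 2 = M' / 2) by (field; lra).
rewrite H in U1, U2.
apply Rabs_le. pose proof (Rle_abs (g 1)). pose proof (Rle_abs (- g 1)). rewrite Rabs_Ropp in H1. assert (0 <= M' / 2 * r) by (apply Rmult_le_pos; lra). lra.
Qed.

Lemma dpow f x df n : derivable_pt_lim f x df ->
  derivable_pt_lim (fun y => f y ^ n) x (INR n * f x ^ Nat.pred n * df).
Proof.
intro H. apply (derivable_pt_lim_comp f (fun y => y ^ n) x df). exact H. apply derivable_pt_lim_pow.
Qed.
Lemma cpow f x n : continuity_pt f x -> continuity_pt (fun y => f y ^ n) x.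
Proof. intro H. induction n; simpl. apply cconst. apply cmul; auto. Qed.

Lemma Lip (g g' : R -> R) a b K : a <= b ->
 (forall x, a <= x <= b -> derivable_pt_lim g x (g' x) /\ continuity_pt g' x) ->
 (forall x, a < x < b -> Rabs (g' x) <= K) -> Rabs (g b - g a) <= K * (b - a).
Proof.
intros hab Hd Hb.
assert (Hq : forall x, a <= x <= b -> derivable_pt_lim (fun s => K * s) x K /\ continuity_pt (fun _ => K) x).
{ intros; split. eapply der_eq. dauto. cbv beta; ring. apply cconst. }
assert (P1 := L1 g g' (fct_cte 0) (fun _ => K) (fun s => K * s) a b 0 0 hab (Rle_refl 0)
  ltac:(intros x Hx; destruct (Hd x Hx); destruct (Hq x Hx); tauto) (RiemannInt_P14 a b 0)
  ltac:(rewrite RiemannInt_P15; lra)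
  ltac:(intros x Hx; pose proof (Rle_abs (g' x)); specialize (Hb x Hx); unfold fct_cte; lra)).
assert (P2 := L1 (fun s => - g s) (fun s => - g' s) (fct_cte 0) (fun _ => K) (fun s => K * s) a b 0 0 hab (Rle_refl 0)
  ltac:(intros x Hx; destruct (Hd x Hx); destruct (Hq x Hx); split; [apply dopp; auto|split; [apply copp|]; tauto]) (RiemannInt_P14 a b 0)
  ltac:(rewrite RiemannInt_P15; lra)
  ltac:(intros x Hx; pose proof (Rle_abs (- g' x)); rewrite Rabs_Ropp in H; specialize (Hb x Hx); unfold fct_cte; lra)).
cbv beta in P1, P2. apply Rabs_le. lra.
Qed.

Lemma Gsmall (G h : R -> R) r E L : 0 < r ->
 (forall s, 0 < s <= r -> Rabs (G r - G s) <= E) ->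
 (forall rho, 0 < rho < r -> exists pr : Riemann_integrable h rho r, RiemannInt pr <= L ^ 2) ->
 (forall s, 0 < s <= r -> G s ^ 2 / s <= h s) -> Rabs (G r) <= E.
Proof.
intros rpos HE Hint Hh.
destruct (Rle_dec (Rabs (G r)) E) as [ok | nok]; auto. exfalso.
set (d := Rabs (G r) - E). assert (dpos : 0 < d) by (unfold d; lra).
assert (Hs : forall s, 0 < s <= r -> d ^ 2 / s <= h s).
{ intros s Hs. apply Rle_trans with (G s ^ 2 / s); [|auto].
  assert (d <= Rabs (G s)).
  { specialize (HE s Hs). pose proof (Rabs_triang_inv (G r) (G s)). unfold d; lra. }
  unfold Rdiv. apply Rmult_le_compat_r. left; apply Rinv_0_lt_compat; lra.
  rewrite <- (pow2_abs (G s)). apply pow_incr. lra. }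
set (rho := r * exp (- ((L^2+1) / d^2))).
assert (rhopos : 0 < rho) by (unfold rho; apply Rmult_lt_0_compat; auto; apply exp_pos).
assert (rholt : rho < r).
{ unfold rho. assert (exp (- ((L ^ 2 + 1) / d ^ 2)) < 1).
  { apply Rlt_le_trans with (exp 0); [apply exp_increasing | rewrite exp_0; lra].
    assert (0 < (L^2+1)/d^2).
    { pose proof (pow2_ge_0 L). assert (0 < d^2) by (apply pow_lt; lra).
      apply Rdiv_lt_0_compat; lra. }
    lra. }
  rewrite <- (Rmult_1_r r) at 2. apply Rmult_lt_compat_l; auto. }
destruct (Hint rho (conj rhopos rholt)) as [pr Hpr].
assert (P := L1 (fun s => d^2 * ln s) (fun s => d^2 / s) h (fun _ => 0) (fun _ => 0) rho r 1 (L^2) ltac:(lra) ltac:(lra)).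
assert (P' : d ^ 2 * ln r - d ^ 2 * ln rho <= 1 * L ^ 2 + (0 - 0)).
{ refine (P _ pr Hpr _).
  - intros x Hx. split; [|split; [|split]].
    + eapply der_eq. apply dmul. apply dconst. apply derivable_pt_lim_ln; lra. cbv beta; field. lra.
    + apply cmul. apply cconst. apply (continuity_pt_inv (fun y => y)). apply cid. lra.
    + apply dconst.
    + apply cconst.
  - intros x Hx. rewrite Rplus_0_r, Rmult_1_l. apply Hs; lra. }
unfold rho in P'. rewrite ln_mult, ln_exp in P' by (auto; apply exp_pos).
assert (d ^ 2 * ((L ^ 2 + 1) / d ^ 2) = L^2 + 1) by (field; lra).
nra.
Qed.

Lemma rj j s : (j = 1 \/ j = 2)%nat -> 0 < s <= 1 -> s ^ 2 <= s ^ j <= s /\ 0 < s ^ j.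
Proof. intros [-> | ->] Hs; simpl; split; try split; nra. Qed.

Lemma near j p F dF L B1 A :
 (j = 1 \/ j = 2)%nat -> 0 <= A -> 0 <= B1 ->
 (forall s, 0 < s -> derivable_pt_lim F s (dF s) /\
     derivable_pt_lim dF s (F s - F s ^ p - INR j / s * dF s) /\ 0 < F s) ->
 (forall a b, 0 < a -> a <= b -> exists pr : Riemann_integrable (fun r => (F r ^ 2 + dF r ^ 2) * r ^ j) a b, RiemannInt pr <= L ^ 2) ->
 Rabs (F 1) <= B1 ->
 (forall s, 0 < s <= 1 -> s ^ j * F s <= A * sqrt s /\ s ^ j * F s ^ p <= A * sqrt s) ->
 exists B, forall r, 0 < r <= 1 -> Rabs (F r) <= B /\ Rabs (dF r) <= B.
Proof.
intros Hj HA HB1 Hd Hint HF1 Hr1.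
set (G := fun s => s ^ j * dF s).
set (G' := fun s => s ^ j * (F s - F s ^ p)).
assert (DG : forall s, 0 < s -> derivable_pt_lim G s (G' s) /\ continuity_pt G' s).
{ intros s Hs. destruct (Hd s Hs) as (D1 & D2 & _). assert (C1 := lim_cont _ _ _ D1). split.
  - eapply der_eq. apply dmul. apply derivable_pt_lim_pow. exact D2.
    unfold G'. destruct Hj as [-> | ->]; simpl; field; lra.
  - unfold G'. apply cmul. apply cpow, cid. apply cplus. auto. apply copp. apply cpow. auto. }
assert (hG : forall s, 0 < s <= 1 -> G s ^ 2 / s <= (F s ^ 2 + dF s ^ 2) * s ^ j).
{ intros s Hs. unfold G. pose proof (pow2_ge_0 (F s)). pose proof (pow2_ge_0 (dF s)).
  destruct Hj as [-> | ->].
  - replace ((s ^ 1 * dF s) ^ 2 / s) with (s * dF s ^ 2) by (field; lra). simpl. nra.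
  - replace ((s ^ 2 * dF s) ^ 2 / s) with (s ^ 3 * dF s ^ 2) by (field; lra). simpl.
    assert (s * (s * (s * 1)) <= s * (s * 1)) by nra. nra. }
assert (Fc : forall s, 0 < s -> continuity_pt F s) by (intros s Hs; destruct (Hd s Hs) as (D1 & _); eapply lim_cont; eauto).
assert (Fp : forall s, 0 < s -> 0 < F s) by (intros s Hs; apply (Hd s Hs)).
assert (Gb : forall r K, 0 < r <= 1 -> (forall t, 0 < t <= r -> Rabs (G' t) <= K) -> Rabs (G r) <= K * r).
{ intros r K Hr HK.
  assert (K0 : 0 <= K) by (specialize (HK r ltac:(lra)); pose proof (Rabs_pos (G' r)); lra).
  apply (Gsmall G (fun r => (F r ^ 2 + dF r ^ 2) * r ^ j) r (K * r) L); [lra | | | ].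
  - intros s Hs. destruct (Req_dec s r) as [-> | ns].
    + rewrite Rminus_diag, Rabs_R0. nra.
    + assert (X := Lip G G' s r K ltac:(lra) ltac:(intros x Hx; apply DG; lra) ltac:(intros x Hx; apply HK; lra)).
      assert (K * (r - s) <= K * r) by nra. rewrite <- Rabs_Ropp. replace (- (G r - G s)) with (G s - G r) by ring.
      rewrite Rabs_minus_sym. lra.
  - intros rho Hrho. apply Hint; lra.
  - intros s Hs. apply hG; lra. }
assert (S1 : forall r, 0 < r <= 1 -> Rabs (dF r) * sqrt r <= 2 * A).
{ intros r Hr.
  assert (X := Gb r (2 * A * sqrt r) Hr).
  assert (Y : Rabs (G r) <= 2 * A * sqrt r * r).
  { apply X. intros t Ht. unfold G'. destruct (Hr1 t ltac:(lra)) as [U1 U2].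
    assert (0 < t ^ j) by (apply pow_lt; lra).
    assert (0 < F t ^ p) by (apply pow_lt, Fp; lra). pose proof (Fp t ltac:(lra)).
    assert (sqrt t <= sqrt r) by (apply sqrt_le_1_alt; lra).
    rewrite Rabs_mult, Rabs_right by lra.
    apply Rle_trans with (t ^ j * F t + t ^ j * F t ^ p).
    - pose proof (Rabs_triang (F t) (- F t ^ p)) as T. rewrite Rabs_Ropp, (Rabs_right (F t)), (Rabs_right (F t ^ p)) in T by lra.
      unfold Rminus. nra.
    - nra. }
  unfold G in Y. rewrite Rabs_mult, (Rabs_right (r ^ j)) in Y by (left; apply pow_lt; lra).
  destruct (rj j r Hj Hr) as [[R1 R2] R3].
  pose proof (sqrt_lt_R0 r ltac:(lra)). pose proof (sqrt_sqrt r ltac:(lra)). pose proof (Rabs_pos (dF r)).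
  assert (r ^ 2 * Rabs (dF r) <= 2 * A * sqrt r * r) by nra.
  assert (r * (Rabs (dF r) * sqrt r) <= r * (2 * A)).
  { apply (Rmult_le_reg_r (sqrt r)); auto. simpl in H2. nra. }
  apply (Rmult_le_reg_l r); lra. }
set (B2 := B1 + 4 * A).
assert (S2 : forall r, 0 < r <= 1 -> 0 < F r <= B2).
{ intros r Hr. split. apply Fp; lra.
  assert (X := L1 (fun s => - F s) (fun s => - dF s) (fct_cte 0) (fun t => 2 * A * / sqrt t) (fun t => 4 * A * sqrt t) r 1 0 0
    ltac:(lra) (Rle_refl 0)).
  assert (Y : - F 1 - - F r <= 0 * 0 + (4 * A * sqrt 1 - 4 * A * sqrt r)).
  { refine (X _ (RiemannInt_P14 r 1 0) ltac:(rewrite RiemannInt_P15; lra) _).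
    - intros x Hx. destruct (Hd x ltac:(lra)) as (D1 & D2 & _). pose proof (sqrt_lt_R0 x ltac:(lra)).
      split; [apply dopp; auto | split; [apply copp; eapply lim_cont; eauto | split]].
      + eapply der_eq. apply dmul. apply dconst. apply derivable_pt_lim_sqrt; lra. cbv beta; field; lra.
      + apply cmul. apply cconst. apply (continuity_pt_inv sqrt). eapply lim_cont. apply derivable_pt_lim_sqrt; lra. lra.
    - intros x Hx. unfold fct_cte. pose proof (S1 x ltac:(lra)). pose proof (sqrt_lt_R0 x ltac:(lra)).
      pose proof (Rle_abs (- dF x)). rewrite Rabs_Ropp in H1.
      assert (- dF x * sqrt x <= 2 * A) by nra.
      apply (Rmult_le_reg_r (sqrt x)); auto. rewrite Rmult_0_l, Rplus_0_l, Rmult_assoc, Rinv_l; lra. }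
  rewrite sqrt_1 in Y. pose proof (sqrt_pos r). apply Rabs_le in HF1 || idtac.
  pose proof (Rle_abs (F 1)). unfold B2. assert (0 <= 4 * A * sqrt r) by (apply Rmult_le_pos; lra). lra. }
set (A2 := B2 + B2 ^ p).
assert (S3 : forall r, 0 < r <= 1 -> Rabs (dF r) <= A2).
{ intros r Hr.
  assert (Y : Rabs (G r) <= A2 * r * r).
  { apply Gb; auto. intros t Ht. unfold G'.
    destruct (S2 t ltac:(lra)) as [P1 P2]. destruct (rj j t Hj ltac:(lra)) as [[R1 R2] R3].
    assert (0 < F t ^ p) by (apply pow_lt; lra).
    assert (F t ^ p <= B2 ^ p) by (apply pow_incr; lra).
    rewrite Rabs_mult, Rabs_right by lra.
    apply Rle_trans with (t ^ j * (F t + F t ^ p)).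
    - apply Rmult_le_compat_l; [lra|]. pose proof (Rabs_triang (F t) (- F t ^ p)) as T. rewrite Rabs_Ropp, (Rabs_right (F t)), (Rabs_right (F t ^ p)) in T by lra.
      unfold Rminus. lra.
    - unfold A2. assert (0 <= F t + F t ^ p) by lra. assert (F t + F t ^ p <= B2 + B2 ^ p) by lra. nra. }
  unfold G in Y. rewrite Rabs_mult, (Rabs_right (r ^ j)) in Y by (left; apply pow_lt; lra).
  destruct (rj j r Hj Hr) as [[R1 R2] R3]. pose proof (Rabs_pos (dF r)).
  assert (r ^ 2 * Rabs (dF r) <= A2 * r ^ 2) by (simpl; nra).
  apply (Rmult_le_reg_l (r^2)). apply pow_lt; lra. lra. }
exists (B2 + A2). intros r Hr. destruct (S2 r Hr). pose proof (S3 r Hr).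
assert (0 <= B2 ^ p) by (apply pow_le; lra).
split. rewrite Rabs_right; unfold A2; lra. unfold A2 in *; lra.
Qed.

Lemma dinv x : x <> 0 -> derivable_pt_lim (fun y => / y) x (- / x ^ 2).
Proof.
intro H. apply is_derive_Reals. auto_derive. auto. field. auto.
Qed.

Lemma r1_3 F dF L B1 :
 (forall s, 0 < s -> derivable_pt_lim F s (dF s) /\ continuity_pt dF s /\ 0 < F s) ->
 (forall a b, 0 < a -> a <= b -> exists pr : Riemann_integrable (fun r => (F r ^ 2 + dF r ^ 2) * r ^ 2) a b, RiemannInt pr <= L ^ 2) ->
 Rabs (F 1) <= B1 -> 0 <= B1 ->
 exists A, 0 <= A /\ forall s, 0 < s <= 1 -> s ^ 2 * F s <= A * sqrt s /\ s ^ 2 * F s ^ 3 <= A * sqrt s.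
Proof.
intros Hd Hint HF1 HB1.
set (A0 := B1 + (L ^ 2 + 1) / 2).
assert (A0p : 0 <= A0) by (unfold A0; pose proof (pow2_ge_0 L); lra).
exists (A0 + A0 ^ 3). split. pose proof (pow_le A0 3 A0p); lra.
intros s Hs.
set (w := sqrt s). assert (wp : 0 < w) by (apply sqrt_lt_R0; lra).
assert (ww : w * w = s) by (apply sqrt_sqrt; lra).
assert (w1 : w <= 1) by (unfold w; rewrite <- sqrt_1; apply sqrt_le_1_alt; lra).
assert (Fw : F s * w <= A0).
{ destruct (Hint s 1 ltac:(lra) ltac:(lra)) as [pr Hpr].
  set (lam := w).
  assert (X := L1 (fun t => - F t) (fun t => - dF t) (fun r => (F r ^ 2 + dF r ^ 2) * r ^ 2)
     (fun t => lam / 2 * / t ^ 2) (fun t => - (lam / 2) * / t) s 1 (/ (2 * lam)) (L ^ 2) ltac:(lra)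
     ltac:(left; apply Rinv_0_lt_compat; unfold lam; lra)).
  assert (Y : - F 1 - - F s <= / (2 * lam) * L ^ 2 + (- (lam / 2) * / 1 - - (lam / 2) * / s)).
  { refine (X _ pr Hpr _).
    - intros x Hx. destruct (Hd x ltac:(lra)) as (D1 & C1 & _). split; [apply dopp; auto | split; [apply copp; auto | split]].
      + eapply der_eq. apply dmul. apply dconst. apply dinv; lra. cbv beta; field; lra.
      + apply cmul. apply cconst. apply (continuity_pt_inv (fun y => y ^ 2)). apply cpow, cid. apply pow_nonzero; lra.
    - intros x Hx. cbv beta.
      assert (2 * Rabs (dF x * x * (lam / x)) <= (dF x * x) ^ 2 + (lam / x) ^ 2) by apply amgm.
      replace (dF x * x * (lam / x)) with (dF x * lam) in H by (field; lra).
      rewrite Rabs_mult, (Rabs_right lam) in H by (unfold lam; lra).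
      pose proof (Rle_abs (- dF x)) as T. rewrite Rabs_Ropp in T.
      pose proof (pow2_ge_0 (F x)). pose proof (pow2_ge_0 (dF x)).
      assert ((dF x * x) ^ 2 <= (F x ^ 2 + dF x ^ 2) * x ^ 2) by nra.
      assert (- dF x * (2 * lam) <= (F x ^ 2 + dF x ^ 2) * x ^ 2 + (lam / x) ^ 2) by (unfold lam in *; nra).
      apply (Rmult_le_reg_r (2 * lam)). unfold lam; lra.
      replace ((/ (2 * lam) * ((F x ^ 2 + dF x ^ 2) * x ^ 2) + lam / 2 * / x ^ 2) * (2 * lam))
        with ((F x ^ 2 + dF x ^ 2) * x ^ 2 + (lam / x) ^ 2) by (field; unfold lam; lra). lra. }
  unfold lam in Y. 
  assert (E : / (2 * w) * L ^ 2 + (- (w / 2) * / 1 - - (w / 2) * / s) <= (L ^ 2 + 1) / (2 * w)).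
  { rewrite <- ww. apply (Rmult_le_reg_r (2 * w * w)). nra.
    replace ((/ (2 * w) * L ^ 2 + (- (w / 2) * / 1 - - (w / 2) * / (w * w))) * (2 * w * w)) with
      (L ^ 2 * w + w - w ^ 3) by (field; lra).
    replace ((L ^ 2 + 1) / (2 * w) * (2 * w * w)) with (L ^ 2 * w + w) by (field; lra).
    pose proof (pow2_ge_0 L). nra. }
  pose proof (Rle_abs (F 1)).
  assert (F s <= B1 + (L ^ 2 + 1) / (2 * w)) by lra.
  apply Rle_trans with (B1 * w + (L ^ 2 + 1) / 2).
  - replace ((L ^ 2 + 1) / 2) with ((L ^ 2 + 1) / (2 * w) * w) by (field; lra). set (c := (L ^ 2 + 1) / (2 * w)) in *. unfold lam. nra.
  - unfold A0. nra. }
pose proof (Hd s ltac:(lra)) as (_ & _ & Fp).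
replace (s ^ 2) with ((w * w) ^ 2) by (rewrite ww; ring). split.
- assert ((w * w) ^ 2 * F s = w * (w * w) * (F s * w)) by ring. rewrite H.
  assert (0 <= A0 ^ 3) by (apply pow_le; lra).
  assert (0 <= w * (w * w)) by nra. assert (w * (w * w) <= w) by nra.
  assert (0 <= F s * w) by nra. nra.
- assert ((w * w) ^ 2 * F s ^ 3 = w * (F s * w) ^ 3) by ring. rewrite H.
  assert ((F s * w) ^ 3 <= A0 ^ 3) by (apply pow_incr; nra).
  nra.
Qed.

Lemma ln_nonpos t : 0 < t <= 1 -> ln t <= 0.
Proof. intros [H1 [H2 | ->]]. rewrite <- ln_1. left; apply ln_increasing; lra. rewrite ln_1; lra. Qed.

Lemma r1_2 F dF L B1 p : (1 <= p)%nat ->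
 (forall s, 0 < s -> derivable_pt_lim F s (dF s) /\ continuity_pt dF s /\ 0 < F s) ->
 (forall a b, 0 < a -> a <= b -> exists pr : Riemann_integrable (fun r => (F r ^ 2 + dF r ^ 2) * r ^ 1) a b, RiemannInt pr <= L ^ 2) ->
 Rabs (F 1) <= B1 -> 0 <= B1 ->
 exists A, 0 <= A /\ forall s, 0 < s <= 1 -> s ^ 1 * F s <= A * sqrt s /\ s ^ 1 * F s ^ p <= A * sqrt s.
Proof.
intros Hp Hd Hint HF1 HB1.
assert (Pp : 1 <= INR p) by (apply (le_INR 1); auto).
set (a := / (2 * INR p)).
assert (apos : 0 < a) by (unfold a; apply Rinv_0_lt_compat; lra).
assert (Ege : forall t, 0 < t <= 1 -> 1 <= Rpower t (- a)).
{ intros t Ht. unfold Rpower. pose proof (ln_nonpos t Ht). pose proof (exp_ineq1_le (- a * ln t)). nra. }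
assert (Em : forall t, 0 < t -> Rpower t (- a - 1) = Rpower t (- a) * / t).
{ intros t Ht. replace (- a - 1) with (- a + - (1)) by ring. rewrite Rpower_plus, (Rpower_Ropp t 1), Rpower_1; auto. }
assert (Ep : forall t, 0 < t -> Rpower t (- a) ^ p = / sqrt t).
{ intros t Ht. rewrite <- Rpower_pow by (unfold Rpower; apply exp_pos).
  rewrite Rpower_mult. replace (- a * INR p) with (- / 2) by (unfold a; field; lra).
  rewrite Rpower_Ropp, Rpower_sqrt; auto. }
set (A0 := B1 + L ^ 2 / 2 + / (2 * a)).
assert (A0p : 0 <= A0) by (unfold A0; pose proof (pow2_ge_0 L); assert (0 < / (2 * a)) by (apply Rinv_0_lt_compat; lra); lra).
exists (A0 + A0 ^ p). split. pose proof (pow_le A0 p A0p); lra.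
intros s Hs.
assert (FE : F s <= A0 * Rpower s (- a)).
{ destruct (Hint s 1 ltac:(lra) ltac:(lra)) as [pr Hpr].
  assert (X := L1 (fun t => - F t) (fun t => - dF t) (fun r => (F r ^ 2 + dF r ^ 2) * r ^ 1)
     (fun t => / 2 * Rpower t (- a - 1)) (fun t => - / (2 * a) * Rpower t (- a)) s 1 (/ 2) (L ^ 2) ltac:(lra) ltac:(lra)).
  assert (Y : - F 1 - - F s <= / 2 * L ^ 2 + (- / (2 * a) * Rpower 1 (- a) - - / (2 * a) * Rpower s (- a))).
  { refine (X _ pr Hpr _).
    - intros x Hx. destruct (Hd x ltac:(lra)) as (D1 & C1 & _). split; [apply dopp; auto | split; [apply copp; auto | split]].
      + eapply der_eq. apply dmul. apply dconst. apply derivable_pt_lim_power; lra. cbv beta. field. lra.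
      + apply cmul. apply cconst. eapply lim_cont. apply derivable_pt_lim_power; lra.
    - intros x Hx. cbv beta.
      assert (2 * Rabs (dF x * x * 1) <= (dF x * x) ^ 2 + 1 ^ 2) by apply amgm.
      rewrite Rmult_1_r, Rabs_mult, (Rabs_right x) in H by lra.
      pose proof (Rle_abs (- dF x)) as T. rewrite Rabs_Ropp in T.
      pose proof (pow2_ge_0 (F x)). pose proof (pow2_ge_0 (dF x)).
      rewrite Em by lra. pose proof (Ege x ltac:(lra)).
      assert (/ x <= Rpower x (- a) * / x).
      { assert (0 < / x) by (apply Rinv_0_lt_compat; lra). nra. }
      assert (- dF x <= dF x ^ 2 * x / 2 + / x / 2).
      { apply (Rmult_le_reg_r (2 * x)). lra.
        replace ((dF x ^ 2 * x / 2 + / x / 2) * (2 * x)) with ((dF x * x) ^ 2 + 1) by (field; lra). nra. }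
      assert (dF x ^ 2 * x <= (F x ^ 2 + dF x ^ 2) * x ^ 1) by (simpl; nra).
      lra. }
  assert (0 < Rpower 1 (- a)) by (unfold Rpower; apply exp_pos).
  assert (0 < / (2 * a)) by (apply Rinv_0_lt_compat; lra).
  pose proof (Rle_abs (F 1)). pose proof (Ege s Hs).
  assert (F s <= B1 + L ^ 2 / 2 + / (2 * a) * Rpower s (- a)) by nra.
  unfold A0. pose proof (pow2_ge_0 L). nra. }
pose proof (Hd s ltac:(lra)) as (_ & _ & Fp).
pose proof (Ege s Hs). pose proof (Ep s ltac:(lra)).
set (E := Rpower s (- a)) in *.
assert (ws : s * / sqrt s = sqrt s).
{ pose proof (sqrt_lt_R0 s ltac:(lra)) as S0. pose proof (sqrt_sqrt s ltac:(lra)) as S1.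
  rewrite <- S1 at 1. field. lra. }
assert (E <= E ^ p) by (rewrite <- (pow_1 E) at 1; apply Rle_pow; auto).
assert (0 <= A0 ^ p) by (apply pow_le; auto).
simpl. rewrite Rmult_1_r. split.
- apply Rle_trans with (s * (A0 * E)). apply Rmult_le_compat_l; lra.
  apply Rle_trans with (s * (A0 * / sqrt s)). apply Rmult_le_compat_l. lra. rewrite <- H0. nra.
  replace (s * (A0 * / sqrt s)) with (A0 * (s * / sqrt s)) by ring. rewrite ws.
  pose proof (sqrt_pos s). nra.
- assert (F s ^ p <= (A0 * E) ^ p) by (apply pow_incr; lra).
  rewrite Rpow_mult_distr, H0 in H3.
  apply Rle_trans with (s * (A0 ^ p * / sqrt s)). apply Rmult_le_compat_l; lra.
  replace (s * (A0 ^ p * / sqrt s)) with (A0 ^ p * (s * / sqrt s)) by ring. rewrite ws.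
  pose proof (sqrt_pos s). nra.
Qed.

Lemma farD (g gd h : R -> R) a K B : 0 <= B ->
 (forall x, a <= x <= a+1 -> derivable_pt_lim g x (gd x) /\ continuity_pt gd x) ->
 forall pr : Riemann_integrable h a (a+1), RiemannInt pr <= K ->
 (forall x, a < x < a+1 -> g x ^ 2 <= h x /\ Rabs (gd x) <= B + 2 * Rabs (g x)) ->
 g a ^ 2 <= (5 + B) * K + B.
Proof.
intros HB Hd pr HK Hh.
assert (X := L1 (fun s => - ((a + 1 - s) * (g s * g s))) (fun s => g s * g s - 2 * (a+1-s) * (g s * gd s))
  h (fun _ => B) (fun s => B * s) a (a+1) (5 + B) K ltac:(lra) ltac:(lra)).
assert (Y : - ((a + 1 - (a + 1)) * (g (a + 1) * g (a + 1))) - - ((a + 1 - a) * (g a * g a)) <= (5 + B) * K + (B * (a + 1) - B * a)).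
{ refine (X _ pr HK _).
  - intros x Hx. destruct (Hd x Hx) as [D1 C2].
    assert (C1 := lim_cont _ _ _ D1).
    split; [|split; [|split]].
    + eapply der_eq. { unfold Rminus. dauto. } cbv beta; ring.
    + unfold Rminus. cauto.
    + eapply der_eq. dauto. cbv beta; ring.
    + apply cconst.
  - intros x Hx. cbv beta. destruct (Hh x Hx) as [H1 H2]. assert (0 <= a+1-x <= 1) by lra.
    assert (T : Rabs (g x * gd x) <= Rabs (g x) * (B + 2 * Rabs (g x))) by (rewrite Rabs_mult; apply Rmult_le_compat_l; auto; apply Rabs_pos).
    pose proof (Rle_abs (- (g x * gd x))) as R1; rewrite Rabs_Ropp in R1.
    assert (2 * Rabs (g x * 1) <= g x ^ 2 + 1 ^ 2) by apply amgm. rewrite Rmult_1_r in H0.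
    assert (g x * g x = Rabs (g x) * Rabs (g x)) by (rewrite <- Rabs_mult; rewrite Rabs_right; [ring|]; pose proof (pow2_ge_0 (g x)); simpl in *; lra).
    assert (Q : (a + 1 - x) * (g x * gd x) >= - Rabs (g x * gd x)).
    { pose proof (Rabs_pos (g x * gd x)). set (p := g x * gd x) in *. destruct (Rle_dec 0 p). nra. nra. }
    pose proof (Rabs_pos (g x)). nra. }
replace (a + 1 - (a + 1)) with 0 in Y by ring. replace (a + 1 - a) with 1 in Y by ring. simpl. lra.
Qed.

From Stdlib Require Import FunctionalExtensionality.

Lemma abs_le_sq x C : x ^ 2 <= C -> Rabs x <= C + 1.
Proof. intro H. rewrite <- (pow2_abs x) in H. pose proof (Rabs_pos x). nra. Qed.

Lemma Fbound n k F dF ddF : (n = 1%nat \/ n = 2%nat \/ n = 3%nat) -> (1 <= k)%nat -> (n = 3%nat -> k = 1%nat) ->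
  ground_state n k F dF ddF -> exists B, 0 <= B /\ forall r, dom n r -> Rabs (F r) <= B /\ Rabs (dF r) <= B.
Proof.
intros Hn Hk Hk3 [Hode [_ [L HL]]].
unfold H1_le in HL.
set (dd := fun r => F r - F r ^ (2 * k + 1) - INR (n - 1) / r * dF r).
assert (DD : forall r, dom n r -> derivable_pt_lim F r (dF r) /\ derivable_pt_lim dF r (dd r) /\ 0 < F r).
{ intros r Hr. destruct (Hode r Hr) as (D1 & D2 & P & E). split; auto. split; auto.
  replace (dd r) with (ddF r) by (unfold dd; lra). auto. }
assert (Ccoef : forall x, dom n x -> continuity_pt (fun r => INR (n - 1) / r * dF r) x).
{ intros x Hx. destruct (DD x Hx) as (D1 & D2 & _).
  destruct (Nat.eq_dec n 1) as [E1 | E1].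
  - replace (fun r => INR (n - 1) / r * dF r) with (fun _ : R => 0).
    apply cconst. apply functional_extensionality. intro r. rewrite E1. simpl. unfold Rdiv. ring.
  - destruct Hx as [Hx | Hx]; [contradiction|].
    apply cmul. apply cmul. apply cconst. apply (continuity_pt_inv (fun y => y)). apply cid. lra.
    eapply lim_cont; eauto. }
assert (Cdd : forall x, dom n x -> continuity_pt dd x).
{ intros x Hx. destruct (DD x Hx) as (D1 & D2 & _). unfold dd, Rminus. apply cplus. apply cplus.
  eapply lim_cont; eauto. apply copp, cpow. eapply lim_cont; eauto. apply copp. apply Ccoef; auto. }
assert (Hfar : forall s, dom n s -> (n = 1%nat \/ 1 <= s) -> F s ^ 2 + dF s ^ 2 <= (F s ^ 2 + dF s ^ 2) * s ^ (n - 1)).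
{ intros s Hs Hs1. assert (1 <= s ^ (n - 1)).
  { destruct Hs1 as [-> | Hs1]. simpl; lra. apply pow_R1_Rle; lra. }
  pose proof (pow2_ge_0 (F s)). pose proof (pow2_ge_0 (dF s)). nra. }
set (B1 := 2 * Rabs L).
assert (FarF : forall r, dom n r -> (n = 1%nat \/ 1 <= r) -> Rabs (F r) <= B1).
{ intros r Hr Hr1.
  assert (Dr1 : dom n (r+1)) by (destruct Hr; [left; auto | right; lra]).
  destruct (HL r (r+1) Hr Dr1 ltac:(lra)) as [pr Hpr].
  apply sq_bound. apply Rabs_pos. rewrite pow2_abs.
  refine (far F dF dd _ r (L^2) _ pr Hpr _).
  - intros x Hx. destruct (DD x ltac:(destruct Hr; [left; auto | right; lra])) as (D1 & D2 & _). auto.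
  - intros x Hx. apply Hfar. destruct Hr; [left; auto | right; lra]. destruct Hr1; [left; auto | right; lra]. }
assert (B1p : 0 <= B1) by (unfold B1; pose proof (Rabs_pos L); lra).
set (BB := B1 + B1 ^ (2 * k + 1)).
assert (BBp : 0 <= BB) by (unfold BB; pose proof (pow_le B1 (2*k+1) B1p); lra).
set (C2 := (5 + BB) * L ^ 2 + BB + 1).
assert (FarD : forall r, dom n r -> (n = 1%nat \/ 1 <= r) -> Rabs (dF r) <= C2).
{ intros r Hr Hr1.
  assert (Dr1 : dom n (r+1)) by (destruct Hr; [left; auto | right; lra]).
  destruct (HL r (r+1) Hr Dr1 ltac:(lra)) as [pr Hpr].
  apply abs_le_sq.
  refine (farD dF dd _ r (L^2) BB BBp _ pr Hpr _).
  - intros x Hx. assert (Dx : dom n x) by (destruct Hr; [left; auto | right; lra]).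
    destruct (DD x Dx) as (D1 & D2 & _). split; auto.
  - intros x Hx. assert (Dx : dom n x) by (destruct Hr; [left; auto | right; lra]).
    assert (Hx1 : n = 1%nat \/ 1 <= x) by (destruct Hr1; [left; auto | right; lra]).
    split. { pose proof (Hfar x Dx Hx1). pose proof (pow2_ge_0 (F x)). lra. }
    assert (FB := FarF x Dx Hx1).
    assert (Rabs (F x ^ (2 * k + 1)) <= B1 ^ (2 * k + 1)) by (rewrite <- RPow_abs; apply pow_incr; split; [apply Rabs_pos | auto]).
    assert (Rabs (INR (n - 1) / x) <= 2).
    { destruct Hx1 as [E | E].
      - rewrite E. simpl. unfold Rdiv. rewrite Rmult_0_l, Rabs_R0. lra.
      - rewrite Rabs_right. apply (Rmult_le_reg_r x). lra. unfold Rdiv. rewrite Rmult_assoc, Rinv_l by lra.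
        assert (INR (n - 1) <= 2). { destruct Hn as [-> | [-> | ->]]; simpl; lra. } nra.
        unfold Rdiv. apply Rle_ge, Rmult_le_pos. apply pos_INR. left; apply Rinv_0_lt_compat; lra. }
    unfold dd. unfold Rminus.
    pose proof (Rabs_triang (F x + - F x ^ (2 * k + 1)) (- (INR (n - 1) / x * dF x))).
    pose proof (Rabs_triang (F x) (- F x ^ (2 * k + 1))).
    rewrite Rabs_Ropp in H1, H2. rewrite Rabs_mult in H1.
    assert (Rabs (INR (n - 1) / x) * Rabs (dF x) <= 2 * Rabs (dF x)) by (apply Rmult_le_compat_r; auto; apply Rabs_pos).
    unfold BB. lra. }
destruct (Nat.eq_dec n 1) as [E1 | E1].
{ exists (B1 + C2). split. unfold C2. pose proof (pow2_ge_0 L). assert (0 <= (5 + BB) * L^2) by (apply Rmult_le_pos; lra). lra.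
  intros r Hr. split. pose proof (FarF r Hr (or_introl E1)). assert (0 <= C2) by (pose proof (FarD r Hr (or_introl E1)); pose proof (Rabs_pos (dF r)); lra). lra.
  pose proof (FarD r Hr (or_introl E1)). lra. }
assert (Hn2 : n = 2%nat \/ n = 3%nat) by lia.
assert (D1 : dom n 1) by (right; lra).
assert (F1 := FarF 1 D1 (or_intror (Rle_refl 1))).
assert (Hint : forall a b, 0 < a -> a <= b -> exists pr : Riemann_integrable (fun r => (F r ^ 2 + dF r ^ 2) * r ^ (n - 1)) a b, RiemannInt pr <= L ^ 2).
{ intros a b Ha Hab. apply HL; auto; right; lra. }
assert (DDp : forall s, 0 < s -> derivable_pt_lim F s (dF s) /\ continuity_pt dF s /\ 0 < F s).
{ intros s Hs. destruct (DD s (or_intror Hs)) as (X1 & X2 & X3). split; auto. split; auto. eapply lim_cont; eauto. }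
assert (Near : exists B, forall r, 0 < r <= 1 -> Rabs (F r) <= B /\ Rabs (dF r) <= B).
{ assert (Hj : (n - 1 = 1 \/ n - 1 = 2)%nat) by lia.
  assert (A : exists A, 0 <= A /\ forall s, 0 < s <= 1 -> s ^ (n - 1) * F s <= A * sqrt s /\ s ^ (n - 1) * F s ^ (2 * k + 1) <= A * sqrt s).
  { destruct Hn2 as [-> | ->].
    - apply (r1_2 F dF L B1 (2 * k + 1)); auto. lia.
    - rewrite (Hk3 eq_refl). apply (r1_3 F dF L B1); auto. }
  destruct A as [A [HA HA']].
  apply (near (n - 1) (2 * k + 1) F dF L B1 A Hj HA B1p); auto.
  intros s Hs. apply (DD s (or_intror Hs)). }
destruct Near as [B3 HB3].
exists (B1 + C2 + Rabs B3). split.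
{ pose proof (FarD 1 D1 (or_intror (Rle_refl 1))). pose proof (Rabs_pos (dF 1)). pose proof (Rabs_pos B3). lra. }
intros r Hr. assert (0 <= C2) by (pose proof (FarD 1 D1 (or_intror (Rle_refl 1))); pose proof (Rabs_pos (dF 1)); lra).
pose proof (Rle_abs B3). pose proof (Rabs_pos B3).
destruct (Rle_dec 1 r) as [r1 | r1].
- pose proof (FarF r Hr (or_intror r1)). pose proof (FarD r Hr (or_intror r1)). split; lra.
- assert (0 < r) by (destruct Hr; [contradiction | auto]).
  destruct (HB3 r ltac:(lra)). split; lra.
Qed.

Lemma sq4 a b c d : (a + b + c + d) ^ 2 <= 4 * (a ^ 2 + b ^ 2 + c ^ 2 + d ^ 2).
Proof. pose proof (pow2_ge_0 (a-b)); pose proof (pow2_ge_0 (a-c)); pose proof (pow2_ge_0 (a-d));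
pose proof (pow2_ge_0 (b-c)); pose proof (pow2_ge_0 (b-d)); pose proof (pow2_ge_0 (c-d)).
assert (4 * (a ^ 2 + b ^ 2 + c ^ 2 + d ^ 2) - (a + b + c + d) ^ 2 = (a-b)^2+(a-c)^2+(a-d)^2+(b-c)^2+(b-d)^2+(c-d)^2) by ring. lra. Qed.

Lemma row_bound (A : nat -> R) x0 x1 x2 x3 c : (forall j, (j < 4)%nat -> Rabs (A j) <= c) ->
  (A 0%nat * x0 + A 1%nat * x1 + A 2%nat * x2 + A 3%nat * x3) ^ 2 <= 4 * c ^ 2 * (x0 ^ 2 + x1 ^ 2 + x2 ^ 2 + x3 ^ 2).
Proof.
intros H.
assert (T : forall j x, (j < 4)%nat -> (A j * x) ^ 2 <= c ^ 2 * x ^ 2).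
{ intros j x Hj. rewrite Rpow_mult_distr. apply Rmult_le_compat_r. apply pow2_ge_0.
  rewrite <- (pow2_abs (A j)). apply pow_incr. split. apply Rabs_pos. auto. }
pose proof (sq4 (A 0%nat * x0) (A 1%nat * x1) (A 2%nat * x2) (A 3%nat * x3)).
pose proof (T 0%nat x0 ltac:(lia)). pose proof (T 1%nat x1 ltac:(lia)). pose proof (T 2%nat x2 ltac:(lia)). pose proof (T 3%nat x3 ltac:(lia)).
nra.
Qed.

Lemma sum4 f : sum_f_R0 f 3 = f 0%nat + f 1%nat + f 2%nat + f 3%nat.
Proof. reflexivity. Qed.

Lemma opnorm_gen (A : nat -> nat -> R) c : 0 <= c -> (forall i j, (i < 4)%nat -> (j < 4)%nat -> Rabs (A i j) <= c) ->
  opnorm_le4 A (4 * c).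
Proof.
intros Hc H z. unfold vnorm4, matvec4, cabs2. rewrite !sum4. cbv beta. simpl fst; simpl snd.
set (S := fst (z 0%nat) ^ 2 + snd (z 0%nat) ^ 2 + (fst (z 1%nat) ^ 2 + snd (z 1%nat) ^ 2) + (fst (z 2%nat) ^ 2 + snd (z 2%nat) ^ 2) + (fst (z 3%nat) ^ 2 + snd (z 3%nat) ^ 2)).
assert (Sp : 0 <= S) by (unfold S; repeat (apply Rplus_le_le_0_compat || apply pow2_ge_0)).
rewrite <- (sqrt_pow2 (4 * c)) by lra. rewrite <- sqrt_mult by (try apply pow2_ge_0; lra).
apply sqrt_le_1_alt.
assert (R : forall i, (i < 4)%nat -> forall w : nat -> R,
  (A i 0%nat * w 0%nat + A i 1%nat * w 1%nat + A i 2%nat * w 2%nat + A i 3%nat * w 3%nat) ^ 2 <=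
  4 * c ^ 2 * (w 0%nat ^ 2 + w 1%nat ^ 2 + w 2%nat ^ 2 + w 3%nat ^ 2)).
{ intros i Hi w. apply row_bound. intros j Hj. apply H; auto. }
pose proof (R 0%nat ltac:(lia) (fun j => fst (z j))). pose proof (R 0%nat ltac:(lia) (fun j => snd (z j))).
pose proof (R 1%nat ltac:(lia) (fun j => fst (z j))). pose proof (R 1%nat ltac:(lia) (fun j => snd (z j))).
pose proof (R 2%nat ltac:(lia) (fun j => fst (z j))). pose proof (R 2%nat ltac:(lia) (fun j => snd (z j))).
pose proof (R 3%nat ltac:(lia) (fun j => fst (z j))). pose proof (R 3%nat ltac:(lia) (fun j => snd (z j))).
cbv beta in *. unfold S. lra.
Qed.

Lemma powabs z K j : Rabs z <= K -> Rabs (z ^ j) <= K ^ j.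
Proof. intro H. rewrite <- RPow_abs. apply pow_incr. split; auto. apply Rabs_pos. Qed.

Lemma powdiff x y K j : Rabs x <= K -> Rabs y <= K -> Rabs (x ^ j - y ^ j) <= INR j * K ^ (j - 1) * Rabs (x - y).
Proof.
intros Hx Hy. assert (K0 : 0 <= K) by (pose proof (Rabs_pos x); lra).
induction j as [|j IH].
- simpl. rewrite Rminus_diag, Rabs_R0. lra.
- replace (x ^ S j - y ^ S j) with (x * (x ^ j - y ^ j) + (x - y) * y ^ j) by (simpl; ring).
  eapply Rle_trans. apply Rabs_triang. rewrite !Rabs_mult.
  assert (Rabs x * Rabs (x ^ j - y ^ j) <= K * (INR j * K ^ (j - 1) * Rabs (x - y))).
  { apply Rmult_le_compat; auto; apply Rabs_pos. }
  assert (Rabs (x - y) * Rabs (y ^ j) <= Rabs (x - y) * K ^ j) by (apply Rmult_le_compat_l; [apply Rabs_pos | apply powabs; auto]).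
  replace (S j - 1)%nat with j by lia. rewrite S_INR.
  destruct j as [|j].
  + simpl in *. lra.
  + replace (K * (INR (S j) * K ^ (S j - 1) * Rabs (x - y))) with (INR (S j) * K ^ S j * Rabs (x - y)) in H
      by (replace (S j - 1)%nat with j by lia; simpl; ring). lra.
Qed.

Lemma om_facts m eps : 0 < m -> 0 < eps <= m / 2 ->
  0 <= m - sqrt (m ^ 2 - eps ^ 2) <= eps ^ 2 / m /\
  Rabs (1 / (2 * m) - (m - sqrt (m ^ 2 - eps ^ 2)) / eps ^ 2) <= eps ^ 2 / (2 * m ^ 3).
Proof.
intros Hm He. set (om := sqrt (m ^ 2 - eps ^ 2)).
assert (Hpos : 0 < m ^ 2 - eps ^ 2) by nra.
assert (O2 : om * om = m ^ 2 - eps ^ 2) by (apply sqrt_sqrt; lra).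
assert (O0 : 0 < om) by (apply sqrt_lt_R0; lra).
assert (Om : om <= m) by nra.
set (d := m - om).
assert (Dd : d * (m + om) = eps ^ 2) by (unfold d; nra).
assert (d0 : 0 <= d) by (unfold d; lra).
assert (dle : d <= eps ^ 2 / m).
{ apply (Rmult_le_reg_r m). lra. unfold Rdiv. rewrite Rmult_assoc, Rinv_l by lra. nra. }
split. split; auto.
assert (E : 1 / (2 * m) - d / eps ^ 2 = - (d / (2 * m * (m + om)))).
{ assert (0 < eps ^ 2) by (apply pow_lt; lra). assert (0 < d) by (apply Rmult_lt_reg_r with (m + om); lra). rewrite <- Dd. unfold d in *. field. repeat split; lra. }
rewrite E, Rabs_Ropp, Rabs_right.
- apply Rle_trans with (d / (2 * m ^ 2)).
  + unfold Rdiv. apply Rmult_le_compat_l; auto. apply Rinv_le_contravar. nra. nra.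
  + apply (Rmult_le_reg_r (2 * m ^ 2)). nra. replace (d / (2 * m ^ 2) * (2 * m ^ 2)) with d by (field; lra).
    replace (eps ^ 2 / (2 * m ^ 3) * (2 * m ^ 2)) with (eps ^ 2 / m) by (field; lra). auto.
- apply Rle_ge. unfold Rdiv. apply Rmult_le_pos; auto. left; apply Rinv_0_lt_compat. nra.
Qed.

Lemma Rabs3 a b c : Rabs (a + b + c) <= Rabs a + Rabs b + Rabs c.
Proof. eapply Rle_trans. apply Rabs_triang. pose proof (Rabs_triang a b). lra. Qed.

Lemma absmul a b A B : Rabs a <= A -> Rabs b <= B -> Rabs (a * b) <= A * B.
Proof. intros. rewrite Rabs_mult. apply Rmult_le_compat; auto; apply Rabs_pos. Qed.

Lemma entries m k K : 0 < m -> (1 <= k)%nat -> 1 <= K -> exists c, 0 <= c /\ forall eps p Vh A B,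
  0 < eps <= 1 -> eps <= m / 2 -> 0 < p -> p ^ (2 * k) = eps ^ 2 ->
  Rabs Vh <= K -> Rabs (A - Vh) <= K * eps ^ 2 -> Rabs B <= K ->
  let vv := p * A in let uu := eps * p * B in
  let f := (vv ^ 2 - uu ^ 2) ^ k in let fp := INR k * (vv ^ 2 - uu ^ 2) ^ (k - 1) in
  let om := omega m eps in
  Rabs (1 / (2 * m) - Vh ^ (2 * k) - (m - om - f) / eps ^ 2) <= c * eps ^ 2 /\
  Rabs (om - m - f) <= c * eps ^ 2 /\
  Rabs (- (1 / (2 * m)) + INR (2 * k + 1) * Vh ^ (2 * k) - (om - m + f + 2 * fp * vv ^ 2) / eps ^ 2) <= c * eps ^ 2 /\
  Rabs (2 * fp * vv * uu / eps) <= c * eps ^ 2 /\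
  Rabs (m - om + f - 2 * fp * uu ^ 2) <= c * eps ^ 2.
Proof.
intros Hm Hk HK.
destruct k as [|j]; [lia|]. replace (S j - 1)%nat with j by lia.
set (M5 := 5 * K ^ 2). set (kk := INR (S j)).
assert (M5p : 0 <= M5) by (unfold M5; pose proof (pow2_ge_0 K); lra).
assert (kkp : 0 <= kk) by (apply pos_INR).
set (Z := INR j * M5 ^ (j - 1) * (4 * K ^ 2)).
assert (Zp : 0 <= Z) by (unfold Z; apply Rmult_le_pos; [apply Rmult_le_pos; [apply pos_INR | apply pow_le; auto] | pose proof (pow2_ge_0 K); lra]).
assert (Pj : 0 <= M5 ^ j) by (apply pow_le; auto).
assert (PSj : 0 <= M5 ^ S j) by (apply pow_le; auto).
set (c := 2 * (/ (2 * m ^ 3)) + 2 / m + 2 * M5 ^ S j + 2 * kk * M5 ^ j * (4 * K ^ 2) + 2 * kk * (Z * M5 + M5 ^ j * (3 * K ^ 2))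
   + 4 * kk * M5 ^ j * K ^ 2 + 2 * kk * M5 ^ j * K ^ 2).
assert (ip : 0 < / (2 * m ^ 3)) by (apply Rinv_0_lt_compat; assert (0 < m ^ 3) by (apply pow_lt; lra); lra).
assert (im : 0 < 2 / m) by (unfold Rdiv; apply Rmult_lt_0_compat; [lra| apply Rinv_0_lt_compat; lra]).
pose proof (pow2_ge_0 K) as K2.
assert (Ts : 0 <= kk * M5 ^ j * (4 * K ^ 2) /\ 0 <= kk * (Z * M5 + M5 ^ j * (3 * K ^ 2)) /\ 0 <= kk * M5 ^ j * K ^ 2).
{ assert (0 <= kk * M5 ^ j) by (apply Rmult_le_pos; auto).
  assert (0 <= Z * M5) by (apply Rmult_le_pos; auto).
  assert (0 <= M5 ^ j * (3 * K ^ 2)) by (apply Rmult_le_pos; lra).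
  split; [|split]; apply Rmult_le_pos; lra. }
exists c. split. { unfold c. lra. }
intros eps p Vh A B He Hem Hp Hpk HV HA HB vv uu f fp om.
destruct (om_facts m eps Hm ltac:(lra)) as [[O1 O2] O3].
change (sqrt (m ^ 2 - eps ^ 2)) with om in O1, O2, O3.
set (e := eps ^ 2) in *.
assert (e0 : 0 < e) by (apply pow_lt; lra).
assert (e1 : e <= 1) by (unfold e; nra).
set (D := A ^ 2 - e * B ^ 2). set (Y := Vh ^ 2).
assert (HA2 : Rabs A <= 2 * K).
{ pose proof (Rabs_triang (A - Vh) Vh). replace (A - Vh + Vh) with A in H by ring. assert (K * e <= K) by nra. lra. }
assert (HY : Rabs Y <= M5).
{ unfold Y, M5. rewrite <- RPow_abs. pose proof (Rabs_pos Vh). assert (Rabs Vh ^ 2 <= K ^ 2) by (apply pow_incr; lra). lra. }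
assert (HD : Rabs D <= M5).
{ unfold D, M5. pose proof (Rabs_triang (A ^ 2) (- (e * B ^ 2))) as T. rewrite Rabs_Ropp in T.
  unfold Rminus. rewrite Rabs_mult, (Rabs_right e) in T by lra. rewrite <- !RPow_abs in T.
  pose proof (Rabs_pos A). pose proof (Rabs_pos B).
  assert (Rabs A ^ 2 <= (2 * K) ^ 2) by (apply pow_incr; lra).
  assert (Rabs B ^ 2 <= K ^ 2) by (apply pow_incr; lra).
  assert (e * Rabs B ^ 2 <= K ^ 2) by (pose proof (pow2_ge_0 (Rabs B)); nra).
  simpl in *. lra. }
assert (HYA : Rabs (Y - A ^ 2) <= 3 * K ^ 2 * e).
{ unfold Y. replace (Vh ^ 2 - A ^ 2) with (- ((A - Vh) * (A + Vh))) by ring. rewrite Rabs_Ropp, Rabs_mult.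
  pose proof (Rabs_triang A Vh). pose proof (Rabs_pos (A - Vh)). pose proof (Rabs_pos (A + Vh)).
  assert (Rabs (A + Vh) <= 3 * K) by lra.
  apply Rle_trans with (K * e * (3 * K)). apply Rmult_le_compat; auto. simpl. lra. }
assert (HDY : Rabs (D - Y) <= 4 * K ^ 2 * e).
{ replace (D - Y) with (- (Y - A ^ 2) - e * B ^ 2) by (unfold D; ring).
  unfold Rminus. eapply Rle_trans. apply Rabs_triang. rewrite Rabs_Ropp, Rabs_Ropp, Rabs_mult, (Rabs_right e) by lra.
  rewrite <- RPow_abs. pose proof (Rabs_pos B). assert (Rabs B ^ 2 <= K ^ 2) by (apply pow_incr; lra).
  assert (e * Rabs B ^ 2 <= e * K ^ 2) by (apply Rmult_le_compat_l; lra). unfold Rminus in HYA. lra. }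
assert (HDj : Rabs (D ^ j) <= M5 ^ j) by (apply powabs; auto).
assert (HDSj : Rabs (D ^ S j) <= M5 ^ S j) by (apply powabs; auto).
assert (HdSj : Rabs (D ^ S j - Y ^ S j) <= kk * M5 ^ j * (4 * K ^ 2) * e).
{ eapply Rle_trans. apply powdiff; eauto. replace (S j - 1)%nat with j by lia. fold kk.
  replace (kk * M5 ^ j * (4 * K ^ 2) * e) with (kk * M5 ^ j * (4 * K ^ 2 * e)) by ring.
  apply Rmult_le_compat_l. apply Rmult_le_pos; auto. auto. }
assert (Hdj : Rabs (Y ^ j - D ^ j) <= Z * e).
{ eapply Rle_trans. apply powdiff; eauto. rewrite Rabs_minus_sym.
  replace (Z * e) with (INR j * M5 ^ (j - 1) * (4 * K ^ 2 * e)) by (unfold Z; ring).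
  apply Rmult_le_compat_l. apply Rmult_le_pos; [apply pos_INR | apply pow_le; auto]. auto. }
assert (Hvu : vv ^ 2 - uu ^ 2 = p ^ 2 * D) by (unfold vv, uu, D, e; ring).
assert (Hp2 : (p ^ 2) ^ S j = e) by (rewrite <- pow_mult; exact Hpk).
assert (E1 : f = e * (D * D ^ j)).
{ unfold f. rewrite Hvu, Rpow_mult_distr, Hp2. simpl. ring. }
assert (Hq : (p ^ 2 * D) ^ j * p ^ 2 = e * D ^ j).
{ rewrite Rpow_mult_distr. rewrite <- Hp2. simpl. ring. }
assert (E2 : fp * vv ^ 2 = kk * e * D ^ j * A ^ 2).
{ unfold fp. rewrite Hvu. replace (kk * e * D ^ j * A ^ 2) with (kk * (e * D ^ j) * A ^ 2) by ring. rewrite <- Hq. unfold vv. ring. }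
assert (E3 : fp * vv * uu = kk * e * D ^ j * A * B * eps).
{ unfold fp. rewrite Hvu. replace (kk * e * D ^ j * A * B * eps) with (kk * (e * D ^ j) * A * B * eps) by ring. rewrite <- Hq. unfold vv, uu. ring. }
assert (E4 : fp * uu ^ 2 = kk * e * D ^ j * e * B ^ 2).
{ unfold fp. rewrite Hvu. replace (kk * e * D ^ j * e * B ^ 2) with (kk * (e * D ^ j) * e * B ^ 2) by ring. rewrite <- Hq. unfold uu, e. ring. }
assert (HVk : Vh ^ (2 * S j) = Y * Y ^ j) by (unfold Y; rewrite pow_mult; simpl; ring).
assert (Hk21 : INR (2 * S j + 1) = 2 * kk + 1) by (unfold kk; rewrite plus_INR, mult_INR; simpl; ring).
assert (Xe : forall x, x * e / e = x) by (intro; field; lra).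
split; [|split; [|split; [|split]]].
- replace (1 / (2 * m) - Vh ^ (2 * S j) - (m - om - f) / e) with
    ((1 / (2 * m) - (m - om) / e) + (D ^ S j - Y ^ S j) + 0) by (rewrite HVk, E1; simpl; field; lra).
  eapply Rle_trans. apply Rabs3. rewrite Rabs_R0. unfold c. nra.
- replace (om - m - f) with (- (m - om) + - (e * D ^ S j) + 0) by (rewrite E1; simpl; ring).
  eapply Rle_trans. apply Rabs3. rewrite Rabs_R0, !Rabs_Ropp, Rabs_right by lra.
  rewrite Rabs_mult, (Rabs_right e) by lra.
  assert (eps ^ 2 / m = 2 / m * e / 2) by (unfold e; field; lra).
  unfold c. fold e in O2. nra.
- rewrite Hk21, HVk.
  replace (- (1 / (2 * m)) + (2 * kk + 1) * (Y * Y ^ j) - (om - m + f + 2 * fp * vv ^ 2) / e) with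
    (- (1 / (2 * m) - (m - om) / e) + - (D ^ S j - Y ^ S j) + 2 * kk * ((Y ^ j - D ^ j) * Y + D ^ j * (Y - A ^ 2)))
    by (replace (2 * fp * vv ^ 2) with (2 * (fp * vv ^ 2)) by ring; rewrite E2, E1; simpl; field; lra).
  eapply Rle_trans. apply Rabs3. rewrite !Rabs_Ropp.
  assert (Rabs (2 * kk * ((Y ^ j - D ^ j) * Y + D ^ j * (Y - A ^ 2))) <= 2 * kk * (Z * M5 + M5 ^ j * (3 * K ^ 2)) * e).
  { rewrite Rabs_mult, (Rabs_right (2 * kk)) by lra.
    replace (2 * kk * (Z * M5 + M5 ^ j * (3 * K ^ 2)) * e) with (2 * kk * (Z * e * M5 + M5 ^ j * (3 * K ^ 2 * e))) by ring.
    apply Rmult_le_compat_l. lra. eapply Rle_trans. apply Rabs_triang.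
    apply Rplus_le_compat; apply absmul; auto. }
  unfold c. nra.
- replace (2 * fp * vv * uu) with (2 * (fp * vv * uu)) by ring. rewrite E3.
  replace (2 * (kk * e * D ^ j * A * B * eps) / eps) with (2 * kk * e * (D ^ j * A * B)) by (field; lra).
  rewrite Rabs_mult, (Rabs_right (2 * kk * e)) by nra.
  assert (Rabs (D ^ j * A * B) <= M5 ^ j * (2 * K) * K) by (apply absmul; auto; apply absmul; auto).
  assert (2 * kk * e * Rabs (D ^ j * A * B) <= 2 * kk * e * (M5 ^ j * (2 * K) * K)) by (apply Rmult_le_compat_l; nra).
  assert (4 * kk * M5 ^ j * K ^ 2 <= c) by (unfold c; assert (0 <= 2 * M5 ^ S j) by lra; assert (0 < / (2 * m ^ 3)) by auto; lra).
  assert (4 * kk * M5 ^ j * K ^ 2 * e <= c * e) by (apply Rmult_le_compat_r; lra).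
  assert (2 * kk * e * (M5 ^ j * (2 * K) * K) = 4 * kk * M5 ^ j * K ^ 2 * e) by ring. lra.
- replace (m - om + f - 2 * fp * uu ^ 2) with ((m - om) + e * D ^ S j + - (2 * kk * e * e * (D ^ j * B ^ 2)))
    by (replace (2 * fp * uu ^ 2) with (2 * (fp * uu ^ 2)) by ring; rewrite E4, E1; simpl; ring).
  eapply Rle_trans. apply Rabs3. rewrite Rabs_Ropp, (Rabs_right (m - om)) by lra.
  rewrite Rabs_mult, (Rabs_right e) by lra.
  rewrite Rabs_mult, (Rabs_right (2 * kk * e * e)) by (apply Rle_ge; repeat apply Rmult_le_pos; lra).
  assert (Rabs (D ^ j * B ^ 2) <= M5 ^ j * K ^ 2) by (apply absmul; auto; rewrite <- RPow_abs; apply pow_incr; split; [apply Rabs_pos|auto]).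
  assert (eps ^ 2 / m = 2 / m * e / 2) by (unfold e; field; lra).
  fold e in O2. assert (0 <= Rabs (D ^ j * B ^ 2)) by apply Rabs_pos.
  assert (2 * kk * e * e * Rabs (D ^ j * B ^ 2) <= 2 * kk * e * (M5 ^ j * K ^ 2)).
  { assert (0 <= 2 * kk * e) by nra. assert (e * Rabs (D ^ j * B ^ 2) <= M5 ^ j * K ^ 2) by nra. nra. }
  unfold c. nra.
Qed.

Theorem lemma5p3 (n k : nat) (m : R) (F dF ddF : R -> R) (v u : R -> R -> R) :
  (n = 1%nat \/ n = 2%nat \/ n = 3%nat) ->
  (1 <= k)%nat ->
  (n = 3%nat -> k = 1%nat) ->
  0 < m ->
  ground_state n k F dF ddF ->
  (exists C eps0, 0 < eps0 /\
     forall eps, 0 < eps < eps0 ->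
       dirac_profile n k m (omega m eps) (v eps) (u eps) /\
       exists MV MU,
         H2_le n (Vtil k m F eps (v eps)) MV /\
         H2_le n (Util k m dF eps (u eps)) MU /\
         MV + MU <= C * eps ^ 2) ->
  exists C eps0, 0 < eps0 /\
    forall eps, 0 < eps < eps0 ->
      forall rho, dom n rho ->
        opnorm_le4 (Wmat k m F eps (v eps) (u eps) rho) (C * eps ^ 2).
Proof.
intros Hn Hk Hk3 Hm Hgs [C [eps0 [He0 Hmain]]].
destruct (Fbound n k F dF ddF Hn Hk Hk3 Hgs) as [BF [BFp HBF]].
set (cV := Rpower (2 * m) (- (1 / (2 * INR k)))).
set (cU := Rpower (2 * m) (- (1 / (2 * INR k)) - 1)).
assert (cVp : 0 < cV) by (unfold cV, Rpower; apply exp_pos).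
assert (cUp : 0 < cU) by (unfold cU, Rpower; apply exp_pos).
set (K := cV * BF + cU * BF + 3 * (Rabs C + 1) + 1).
assert (Kfacts : 0 <= cV * BF /\ 0 <= cU * BF /\ 0 <= Rabs C).
{ split; [|split]; try (apply Rmult_le_pos; lra). apply Rabs_pos. }
assert (K1 : 1 <= K) by (unfold K; lra).
destruct (entries m k K Hm Hk K1) as [c [cp Hc]].
exists (4 * c), (Rmin eps0 (Rmin 1 (m / 2))). split.
{ apply Rmin_pos; auto. apply Rmin_pos; lra. }
intros eps Heps rho Hrho.
assert (e0 : eps < eps0) by (pose proof (Rmin_l eps0 (Rmin 1 (m/2))); lra).
assert (e1 : eps <= 1) by (pose proof (Rmin_r eps0 (Rmin 1 (m/2))); pose proof (Rmin_l 1 (m/2)); lra).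
assert (e2 : eps <= m / 2) by (pose proof (Rmin_r eps0 (Rmin 1 (m/2))); pose proof (Rmin_r 1 (m/2)); lra).
destruct (Hmain eps ltac:(lra)) as [_ [MV [MU [HV [HU HMM]]]]].
assert (MVp : 0 <= MV) by (apply HV). assert (MUp : 0 <= MU) by (apply HU).
set (M' := (Rabs C + 1) * eps ^ 2).
assert (ep2 : 0 < eps ^ 2) by (apply pow_lt; lra).
assert (M'p : 0 < M') by (unfold M'; apply Rmult_lt_0_compat; [pose proof (Rabs_pos C); lra | auto]).
assert (CM : C * eps ^ 2 <= M') by (unfold M'; apply Rmult_le_compat_r; [lra|]; pose proof (Rle_abs C); lra).
assert (SV := sob n _ MV M' Hn HV ltac:(lra) M'p rho Hrho).
assert (SU := sob n _ MU M' Hn HU ltac:(lra) M'p rho Hrho).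
set (p := Rpower eps (1 / INR k)).
assert (pp : 0 < p) by (unfold p, Rpower; apply exp_pos).
assert (kpos : 0 < INR k) by (apply lt_0_INR; lia).
assert (Hpk : p ^ (2 * k) = eps ^ 2).
{ unfold p. rewrite <- Rpower_pow by (unfold Rpower; apply exp_pos). rewrite Rpower_mult.
  replace (1 / INR k * INR (2 * k)) with (INR 2) by (rewrite mult_INR; simpl; field; lra).
  apply Rpower_pow. lra. }
assert (Hq : Rpower eps (1 + 1 / INR k) = eps * p) by (unfold p; rewrite Rpower_plus, Rpower_1 by lra; ring).
set (Vh := Vhat k m F rho).
set (A := Vh + Vtil k m F eps (v eps) rho).
set (B := Uhat k m dF rho + Util k m dF eps (u eps) rho).
assert (Hv : v eps (rho / eps) = p * A).
{ unfold A, Vh, Vtil. fold p. field. lra. }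
assert (Hu : u eps (rho / eps) = eps * p * B).
{ unfold B, Util. rewrite Hq. field. lra. }
assert (HVh : Rabs Vh <= K).
{ unfold Vh, Vhat. fold cV. rewrite Rabs_mult, Rabs_right by lra.
  destruct (HBF rho Hrho). assert (cV * Rabs (F rho) <= cV * BF) by (apply Rmult_le_compat_l; lra). unfold K; lra. }
assert (HAV : Rabs (A - Vh) <= K * eps ^ 2).
{ unfold A. replace (Vh + Vtil k m F eps (v eps) rho - Vh) with (Vtil k m F eps (v eps) rho) by ring.
  eapply Rle_trans. exact SV. unfold M'. assert (3 * (Rabs C + 1) <= K) by (unfold K; lra). nra. }
assert (HB : Rabs B <= K).
{ unfold B, Uhat. fold cU. eapply Rle_trans. apply Rabs_triang. rewrite Rabs_Ropp, Rabs_mult, (Rabs_right cU) by lra.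
  destruct (HBF rho Hrho). assert (cU * Rabs (dF rho) <= cU * BF) by (apply Rmult_le_compat_l; lra).
  assert (M' <= Rabs C + 1) by (unfold M'; pose proof (Rabs_pos C); assert (eps ^ 2 <= 1) by (simpl; nra); nra).
  unfold K. lra. }
pose proof (Hc eps p Vh A B ltac:(lra) e2 pp Hpk HVh HAV HB) as W. cbv zeta in W.
destruct W as (W1 & W2 & W3 & W4 & W5).
replace (4 * c * eps ^ 2) with (4 * (c * eps ^ 2)) by ring.
apply opnorm_gen. nra.
assert (Z : 0 <= c * eps ^ 2) by nra.
intros i j Hi Hj.
destruct i as [|[|[|[|i]]]]; try lia; destruct j as [|[|[|[|j]]]]; try lia;
  unfold Wmat; cbv zeta; rewrite ?Hv, ?Hu; fold Vh; try (rewrite Rabs_R0; exact Z); auto.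
Qed.
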